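(* Let $(\mathcal A;\mathcal E)$ be an exact category with exact coproducts and let $\mathcal I$ be a left closed ideal. If $a^j\in\mathcal I$ for all $j$ in a set $J$, then the coproduct morphism $\amalg_j a^j:\amalg_j A^j_0\to\amalg_j A^j_1$ belongs to $\mathcal I$.
   Context: An exact category $(\mathcal A;\mathcal E)$ is an additive category with a class of conflations satisfying the Quillen–Keller axioms; it has exact coproducts if set-indexed coproducts exist and coproducts of conflations are conflations. $\mathrm{Ext}(A,B)$ is the group of conflations $B\to C\to A$. For $a:A_0\to A_1$, $b:B_0\to B_1$, $\mathrm{Ext}(a,b):\mathrm{Ext}(A_1,B_0)\to\mathrm{Ext}(A_0,B_1)$ is pushout along $b$ followed by pullback along $a$. For a class $\mathcal M$ of morphisms, ${}^\perp\mathcal M$ is the ideal of morphisms $a$ with $\mathrm{Ext}(a,m)=0$ for all $m\in\mathcal M$. An ideal is left closed if it is of the form ${}^\perp\mathcal M$ for some class $\mathcal M$ of morphisms. *)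

(* Defs.v *)
From HB Require Import structures.
From mathcomp Require Import all_boot all_algebra.
Set Implicit Arguments. Unset Strict Implicit. Unset Printing Implicit Defensive.
Import GRing.Theory.
Local Open Scope ring_scope.

Record preadditive := PreAdditive {
  Obj :> Type;
  Mor : Obj -> Obj -> zmodType;
  comp : forall {X Y Z : Obj}, Mor Y Z -> Mor X Y -> Mor X Z;
  idm : forall X : Obj, Mor X X;
  compA : forall X Y Z W (h : Mor Z W) (g : Mor Y Z) (f : Mor X Y),
      comp h (comp g f) = comp (comp h g) f;
  comp1m : forall X Y (f : Mor X Y), comp (idm Y) f = f;
  compm1 : forall X Y (f : Mor X Y), comp f (idm X) = f;
  compDl : forall X Y Z (g g' : Mor Y Z) (f : Mor X Y),
      comp (g + g') f = comp g f + comp g' f;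
  compDr : forall X Y Z (g : Mor Y Z) (f f' : Mor X Y),
      comp g (f + f') = comp g f + comp g f'
}.

Arguments comp {p X Y Z}.
Arguments idm {p}.

Section Defs.
Variable C : preadditive.

(* additive: a zero object and binary biproducts *)
Definition additive : Prop :=
  (exists Z : C, idm Z = 0) /\
  (forall X Y : C, exists (P : C) (p1 : Mor P X) (p2 : Mor P Y)
                          (i1 : Mor X P) (i2 : Mor Y P),
      [/\ comp p1 i1 = idm X, comp p2 i2 = idm Y &
          comp i1 p1 + comp i2 p2 = idm P]).

Definition is_iso {X Y : C} (f : Mor X Y) : Prop :=
  exists g : Mor Y X, comp g f = idm X /\ comp f g = idm Y.

Definition is_kernel {B X A : C} (i : Mor B X) (d : Mor X A) : Prop :=
  comp d i = 0 /\
  forall (Y : C) (f : Mor Y X), comp d f = 0 -> exists! g : Mor Y B, comp i g = f.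

Definition is_cokernel {B X A : C} (i : Mor B X) (d : Mor X A) : Prop :=
  comp d i = 0 /\
  forall (Y : C) (f : Mor X Y), comp f i = 0 -> exists! g : Mor A Y, comp g d = f.

Definition is_pullback {X A A' : C} (d : Mor X A) (f : Mor A' A)
    (P : C) (d' : Mor P A') (f' : Mor P X) : Prop :=
  comp d f' = comp f d' /\
  forall (Y : C) (u : Mor Y X) (v : Mor Y A'), comp d u = comp f v ->
    exists! w : Mor Y P, comp f' w = u /\ comp d' w = v.
Arguments is_pullback {X A A'} d f P d' f'.

Definition is_pushout {B X B' : C} (i : Mor B X) (f : Mor B B')
    (Q : C) (i' : Mor B' Q) (f' : Mor X Q) : Prop :=
  comp f' i = comp i' f /\
  forall (Y : C) (u : Mor X Y) (v : Mor B' Y), comp u i = comp v f ->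
    exists! w : Mor Q Y, comp w f' = u /\ comp w i' = v.
Arguments is_pushout {B X B'} i f Q i' f'.

Definition confl_class := forall B X A : C, Mor B X -> Mor X A -> Prop.

Variable E : confl_class.

Definition deflation {X A : C} (d : Mor X A) : Prop :=
  exists (B : C) (i : Mor B X), E i d.
Definition inflation {B X : C} (i : Mor B X) : Prop :=
  exists (A : C) (d : Mor X A), E i d.

(* Quillen--Keller axioms (Keller's minimal form) *)
Record is_exact : Prop := {
  ex_kc : forall (B X A : C) (i : Mor B X) (d : Mor X A),
      E i d -> is_kernel i d /\ is_cokernel i d;
  ex_iso : forall (B X A B' X' A' : C) (i : Mor B X) (d : Mor X A)
      (i' : Mor B' X') (d' : Mor X' A')
      (be : Mor B B') (xi : Mor X X') (al : Mor A A'),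
      E i d -> is_kernel i' d' -> is_cokernel i' d' ->
      is_iso be -> is_iso xi -> is_iso al ->
      comp xi i = comp i' be -> comp al d = comp d' xi -> E i' d';
  ex0 : forall Z : C, idm Z = 0 -> deflation (idm Z);
  ex1 : forall (X Y Z : C) (d : Mor X Y) (d' : Mor Y Z),
      deflation d -> deflation d' -> deflation (comp d' d);
  ex2 : forall (X A A' : C) (d : Mor X A) (f : Mor A' A), deflation d ->
      exists (P : C) (d' : Mor P A') (f' : Mor P X),
        is_pullback d f P d' f' /\ deflation d';
  ex2op : forall (B X B' : C) (i : Mor B X) (f : Mor B B'), inflation i ->
      exists (Q : C) (i' : Mor B' Q) (f' : Mor X Q),
        is_pushout i f Q i' f' /\ inflation i'
}.

Definition is_coproduct (J : Type) (F : J -> C) (S : C)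
    (inj : forall j, Mor (F j) S) : Prop :=
  forall (Y : C) (f : forall j, Mor (F j) Y),
    exists! g : Mor S Y, forall j, comp g (inj j) = f j.
Arguments is_coproduct {J} F S inj.

Definition is_coprod_map (J : Type) (A0 A1 : J -> C)
    (a : forall j, Mor (A0 j) (A1 j)) (S0 S1 : C)
    (inj0 : forall j, Mor (A0 j) S0) (inj1 : forall j, Mor (A1 j) S1)
    (s : Mor S0 S1) : Prop :=
  forall j, comp s (inj0 j) = comp (inj1 j) (a j).
Arguments is_coprod_map {J A0 A1} a {S0 S1} inj0 inj1 s.

Definition exact_coproducts : Prop :=
  (forall (J : Type) (F : J -> C), exists (S : C) (inj : forall j, Mor (F j) S),
      is_coproduct F S inj) /\
  (forall (J : Type) (B X A : J -> C) (i : forall j, Mor (B j) (X j))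
      (d : forall j, Mor (X j) (A j)),
      (forall j, E (i j) (d j)) ->
      forall (SB SX SA : C) (injB : forall j, Mor (B j) SB)
        (injX : forall j, Mor (X j) SX) (injA : forall j, Mor (A j) SA),
      is_coproduct B SB injB -> is_coproduct X SX injX -> is_coproduct A SA injA ->
      forall (si : Mor SB SX) (sd : Mor SX SA),
      is_coprod_map i injB injX si -> is_coprod_map d injX injA sd ->
      E si sd).

(* Ext(a,b) = 0 for a : A0 -> A1, b : B0 -> B1: for every conflation
   eta : B0 -i-> X -d-> A1, the conflation a^* b_* eta (pushout along b,
   then pullback along a) is split, i.e. its deflation has a section. *)
Definition ext_zero {A0 A1 B0 B1 : C} (a : Mor A0 A1) (b : Mor B0 B1) : Prop :=
  forall (X : C) (i : Mor B0 X) (d : Mor X A1), E i d ->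
  forall (Q : C) (i2 : Mor B1 Q) (c : Mor X Q), is_pushout i b Q i2 c ->
  forall d2 : Mor Q A1, comp d2 c = d -> comp d2 i2 = 0 ->
  forall (P : C) (d3 : Mor P A0) (p : Mor P Q), is_pullback d2 a P d3 p ->
  exists s : Mor A0 P, comp d3 s = idm A0.

Definition left_perp (M : forall X Y : C, Mor X Y -> Prop)
    {A0 A1 : C} (a : Mor A0 A1) : Prop :=
  forall (B0 B1 : C) (m : Mor B0 B1), M B0 B1 m -> ext_zero a m.

End Defs.

Arguments Mor {p}.
Arguments is_pullback {C X A A'} d f P d' f'.
Arguments is_pushout {C B X B'} i f Q i' f'.
Arguments is_coproduct {C J} F S inj.
Arguments is_coprod_map {C J A0 A1} a {S0 S1} inj0 inj1 s.

(* Main.v *)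
Require Import Defs.
From mathcomp Require Import all_boot all_algebra.
From Stdlib Require Import ClassicalEpsilon.
Set Implicit Arguments. Unset Strict Implicit. Unset Printing Implicit Defensive.
Local Notation comp := Defs.comp.
Local Notation compA := Defs.compA.

Section Aux.
Import GRing.Theory.
Local Open Scope ring_scope.
Variable C : preadditive.
Variable E : confl_class C.
Hypothesis HE : is_exact E.

Lemma comp0m (X Y Z : C) (f : Mor X Y) : comp (0 : Mor Y Z) f = 0.
Proof.
have h := compDl (0 : Mor Y Z) 0 f. rewrite addr0 in h.
by apply/eqP; rewrite -(subrr (comp (0 : Mor Y Z) f)) {2}h addrK.
Qed.

Lemma compm0 (X Y Z : C) (f : Mor Y Z) : comp f (0 : Mor X Y) = 0.
Proof.
have h := compDr f (0 : Mor X Y) 0. rewrite addr0 in h.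
by apply/eqP; rewrite -(subrr (comp f (0 : Mor X Y))) {2}h addrK.
Qed.

Lemma iso_id (X : C) : is_iso (idm X).
Proof. by exists (idm X); rewrite comp1m. Qed.

Lemma confl_kernel (B K X A : C) (k : Mor K X) (d : Mor X A) (i : Mor B X) :
  E k d -> is_kernel i d -> E i d.
Proof.
move=> Ekd Hi.
have [[Hk0 Hk] [Hc0 Hc]] := ex_kc HE Ekd.
have [Hi0 Hiu] := Hi.
have [phi [Hphi _]] := Hiu _ k Hk0.
have [psi [Hpsi _]] := Hk _ i Hi0.
apply: (ex_iso HE (be := phi) (xi := idm X) (al := idm A) Ekd Hi) => //.
- split=> // Y f Hf; apply: Hc.
  by rewrite -Hphi compA Hf comp0m.
- exists psi; split.
  + have [g [_ gu]] := Hk _ k Hk0.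
    rewrite -(gu (comp psi phi)); last by rewrite compA Hpsi.
    by rewrite (gu (idm K)) // compm1.
  + have [g [_ gu]] := Hiu _ i Hi0.
    rewrite -(gu (comp phi psi)); last by rewrite compA Hphi.
    by rewrite (gu (idm B)) // compm1.
- exact: iso_id.
- exact: iso_id.
- by rewrite comp1m Hphi.
- by rewrite comp1m compm1.
Qed.

Lemma confl_cokernel (B X A A' : C) (i : Mor B X) (e : Mor X A') (d : Mor X A) :
  E i e -> is_cokernel i d -> E i d.
Proof.
move=> Eie Hd.
have [[Hk0 Hk] [Hc0 Hc]] := ex_kc HE Eie.
have [Hd0 Hdu] := Hd.
have [al [Hal _]] := Hc _ d Hd0.
have [be [Hbe _]] := Hdu _ e Hk0.
apply: (ex_iso HE (be := idm B) (xi := idm X) (al := al) Eie) => //.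
- split=> // Y f Hf; apply: Hk.
  by rewrite -Hbe -compA Hf compm0.
- exact: iso_id.
- exact: iso_id.
- exists be; split.
  + have [g [_ gu]] := Hc _ e Hk0.
    rewrite -(gu (comp be al)); last by rewrite -compA Hal.
    by rewrite (gu (idm A')) // comp1m.
  + have [g [_ gu]] := Hdu _ d Hd0.
    rewrite -(gu (comp al be)); last by rewrite -compA Hbe.
    by rewrite (gu (idm A)) // comp1m.
- by rewrite comp1m compm1.
- by rewrite compm1.
Qed.

Lemma pushout_cokernel (B X A B' Q : C) (i : Mor B X) (d : Mor X A) (m : Mor B B')
  (i2 : Mor B' Q) (c : Mor X Q) (d2 : Mor Q A) :
  is_cokernel i d -> is_pushout i m Q i2 c -> comp d2 c = d -> comp d2 i2 = 0 ->
  is_cokernel i2 d2.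
Proof.
move=> [Hd0 Hd] [Hpo Hpu] Hd2c Hd2i2; split=> // Y f Hf.
have h1 : comp (comp f c) i = 0 by rewrite -compA Hpo compA Hf comp0m.
have [g [Hg gu]] := Hd _ (comp f c) h1.
exists g; split.
- have h2 : comp (comp f c) i = comp 0 m by rewrite h1 comp0m.
  have [w [_ wu]] := Hpu Y (comp f c) 0 h2.
  have e1 := wu f (conj erefl Hf).
  suff e2 : w = comp g d2 by rewrite -e2 e1.
  apply: wu; split.
  + by rewrite -compA Hd2c.
  + by rewrite -compA Hd2i2 compm0.
- move=> g' Hg'; apply: gu; by rewrite -Hg' -compA Hd2c.
Qed.

Lemma pullback_confl (B X S A : C) (i : Mor B X) (d : Mor X S) (g : Mor A S) :
  E i d ->
  exists (X' : C) (i' : Mor B X') (d' : Mor X' A) (f' : Mor X' X),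
    [/\ E i' d', comp f' i' = i & comp d f' = comp g d'].
Proof.
move=> Eid.
have [[Hi0 Hiu] _] := ex_kc HE Eid.
have hd : deflation E d by exists B, i.
have [P [d' [f' [[Hpb Hpu] [K [k Ek]]]]]] := ex2 HE g hd.
have h0 : comp d i = comp g (0 : Mor B A) by rewrite Hi0 compm0.
have [i' [[Hi1 Hi2] _]] := Hpu B i 0 h0.
exists P, i', d', f'; split=> //.
apply: (confl_kernel Ek); split=> // Y f Hf.
have h3 : comp d (comp f' f) = 0 by rewrite compA Hpb -compA Hf compm0.
have [h [Hh hu]] := Hiu Y _ h3.
have h4 : comp d (comp f' f) = comp g (0 : Mor Y A) by rewrite h3 compm0.
have [w [_ wu]] := Hpu Y (comp f' f) 0 h4.
exists h; split.
- have e1 := wu f (conj erefl Hf).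
  suff e2 : w = comp i' h by rewrite -e2 e1.
  apply: wu; split.
  + by rewrite compA Hi1.
  + by rewrite compA Hi2 comp0m.
- move=> h' Hh'; apply: hu; by rewrite -Hh' compA Hi1.
Qed.
End Aux.
Theorem lemma5p4 (C : preadditive) (E : confl_class C)
  (HA : additive C) (HE : is_exact E) (HC : exact_coproducts E)
  (I M : forall X Y : C, Mor X Y -> Prop)
  (HI : forall (X Y : C) (f : Mor X Y), I X Y f <-> left_perp E M f)
  (J : Type) (A0 A1 : J -> C) (a : forall j, Mor (A0 j) (A1 j))
  (Ha : forall j, I (A0 j) (A1 j) (a j))
  (S0 S1 : C) (inj0 : forall j, Mor (A0 j) S0) (inj1 : forall j, Mor (A1 j) S1)
  (H0 : is_coproduct A0 S0 inj0) (H1 : is_coproduct A1 S1 inj1)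
  (s : Mor S0 S1) (Hs : is_coprod_map a inj0 inj1 s) :
  I S0 S1 s.
Proof.
apply/HI => B0 B1 m Hm X i d Eid Q i2 c Hpo d2 Hd2c Hd2i2 P d3 p Hpb.
have key : forall j, exists t : Mor (A0 j) P, comp d3 t = inj0 j.
  move=> j.
  have [X' [i' [d' [f' [Ei' Hfi Hdf]]]]] := pullback_confl HE (inj1 j) Eid.
  have [[Hi'0 _] Hcok'] := ex_kc HE Ei'.
  have hinf : inflation E i' by exists (A1 j), d'.
  have [Q' [i2' [c' [Hpo' [A' [e Ee]]]]]] := ex2op HE m hinf.
  have [Hpo'1 Hpo'u] := Hpo'.
  have h0 : comp d' i' = comp (0%R : Mor B1 (A1 j)) m by rewrite Hi'0 comp0m.
  have [d2' [[Hd2'c Hd2'i] _]] := Hpo'u _ d' 0%R h0.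
  have Hck := pushout_cokernel Hcok' Hpo' Hd2'c Hd2'i.
  have E2 := confl_cokernel HE Ee Hck.
  have hdef : deflation E d2' by exists B1, i2'.
  have [P' [d3' [p' [Hpb' _]]]] := ex2 HE (a j) hdef.
  have Hz : ext_zero E (a j) m := (proj1 (HI _ _ _) (Ha j)) _ _ m Hm.
  have [sg Hsg] := Hz X' i' d' Ei' Q' i2' c' Hpo' d2' Hd2'c Hd2'i P' d3' p' Hpb'.
  have hq : comp (comp c f') i' = comp i2 m by rewrite -compA Hfi (proj1 Hpo).
  have [q [[Hqc Hqi] _]] := Hpo'u Q (comp c f') i2 hq.
  have h5 : comp (comp (inj1 j) d') i' = comp (0%R : Mor B1 S1) m.
    by rewrite -compA Hi'0 !compm0 comp0m.
  have [w [_ wu]] := Hpo'u S1 (comp (inj1 j) d') 0%R h5.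
  have Hdq : comp d2 q = comp (inj1 j) d2'.
    transitivity w; [symmetry|]; apply: wu; split.
    - by rewrite -compA Hqc compA Hd2c Hdf.
    - by rewrite -compA Hqi Hd2i2.
    - by rewrite -compA Hd2'c.
    - by rewrite -compA Hd2'i compm0.
  have Hu : comp d2 (comp q (comp p' sg)) = comp s (inj0 j).
    by rewrite compA Hdq -compA (compA d2' p') (proj1 Hpb') -compA Hsg compm1 Hs.
  have [w' [[_ Hw'] _]] := (proj2 Hpb) _ _ _ Hu.
  by exists w'.
have [t Ht] : exists t : forall j, Mor (A0 j) P, forall j, comp d3 (t j) = inj0 j.
  exists (fun j => proj1_sig (constructive_indefinite_description _ (key j))).
  move=> j; exact: proj2_sig (constructive_indefinite_description _ (key j)).
have [g [Hg _]] := H0 P t.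
exists g.
have [w [_ wu]] := H0 S0 inj0.
transitivity w; [symmetry|]; apply: wu => j.
- by rewrite -compA Hg Ht.
- by rewrite comp1m.
Qed.
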